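(* Let $T$ be a tree of order $n$. Then $$\frac{n+2\gamma(T)}{3}\le \operatorname{avd}(T)\le\frac{n+2\Gamma(T)}{3}.$$
   Context: A dominating set of a graph $G=(V,E)$ is a set $S\subseteq V$ such that every vertex is in $S$ or adjacent to a vertex of $S$; it is minimal if no proper subset is dominating. $\gamma(T)$ is the minimum size of a dominating set and $\Gamma(T)$ the maximum size of a minimal dominating set. $\operatorname{avd}(T)=\frac{1}{|\mathcal{D}(T)|}\sum_{S\in\mathcal{D}(T)}|S|$ is the average size of a dominating set, where $\mathcal{D}(T)$ is the collection of all dominating sets of $T$. *)

(* Defs.v *)
From mathcomp Require Import all_boot all_order all_algebra.
Set Implicit Arguments. Unset Strict Implicit. Unset Printing Implicit Defensive.
Import GRing.Theory Num.Theory.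

Section Dom.
Variables (T : finType) (e : rel T).

Definition simple_graph : Prop := symmetric e /\ irreflexive e.

Definition n_edges : nat := #|[set p : T * T | e p.1 p.2]| %/ 2.

Definition is_tree : Prop :=
  [/\ simple_graph, 0 < #|T|, (forall u v : T, connect e u v)
    & n_edges = #|T| - 1].

Definition dominating (S : {set T}) : bool :=
  [forall v, (v \in S) || [exists u in S, e u v]].

Definition minimal_dominating (S : {set T}) : bool :=
  dominating S && [forall S' : {set T}, (S' \proper S) ==> ~~ dominating S'].

(* gamma: minimum size of a dominating set (setT is always dominating) *)
Definition gamma : nat :=
  #|[arg min_(S < [set: T] | dominating S) #|S|]|.

Definition Gamma_ : nat := \max_(S : {set T} | minimal_dominating S) #|S|.

Definition n_dom : nat := #|[set S : {set T} | dominating S]|.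

Definition avd : rat :=
  (\sum_(S : {set T} | dominating S) #|S|)%:R / (n_dom)%:R.

End Dom.

(* Main.v *)
Require Import Defs.
From mathcomp Require Import all_boot all_order all_algebra zify.
Set Implicit Arguments. Unset Strict Implicit. Unset Printing Implicit Defensive.

Definition outp (T : finType) (e : rel T) (W : {set T}) :=
  [set p : T * T | e p.1 p.2 && ((p.1 \notin W) || (p.2 \notin W))].

Lemma cross_edge (T : finType) (e : rel T) (W : {set T}) w0 x0 :
  symmetric e -> connect e w0 x0 -> w0 \in W -> x0 \notin W ->
  exists w x, [/\ w \in W, x \notin W & e w x].
Proof.
move=> sym c w0W x0W.
case: (boolP [exists w, exists x, [&& w \in W, x \notin W & e w x]]).
  by case/existsP=> w /existsP[x /and3P[? ? ?]]; exists w, x.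
move=> /negP nex.
have cl : closed e W.
  move=> a b eab; apply/idP/idP => H; apply/negPn/negP => H2; apply: nex.
    by apply/existsP; exists a; apply/existsP; exists b; rewrite H H2 eab.
  by apply/existsP; exists b; apply/existsP; exists a; rewrite H H2 sym eab.
by move: (closed_connect cl c); rewrite w0W (negbTE x0W).
Qed.

Lemma outp_card (T : finType) (e : rel T) :
  symmetric e -> irreflexive e -> (forall u v : T, connect e u v) ->
  forall k (W : {set T}), #|~: W| = k -> W != set0 -> 2 * k <= #|outp e W|.
Proof.
move=> sym irr conn; elim=> [|k IH] W hk Wn0; first by [].
case/set0Pn: Wn0 => w0 w0W.
have : exists x0, x0 \in ~: W by apply/set0Pn; rewrite -card_gt0 hk.
case=> x0; rewrite inE => x0W.
have [w [x [wW xW ewx]]] := cross_edge sym (conn w0 x0) w0W x0W.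
have hk' : #|~: (x |: W)| = k.
  move: hk; rewrite (cardsD1 x (~: W)) inE xW add1n => -[<-].
  by apply: eq_card => y; rewrite !inE negb_or andbC.
have /IH IH' : (x |: W) != set0 by apply/set0Pn; exists x; rewrite !inE eqxx.
have IH2 := IH' hk'.
have sub : (outp e (x |: W)) :|: [set (w, x); (x, w)] \subset outp e W.
  apply/subsetP=> -[a b]; rewrite !inE /=.
  case/orP=> [/andP[eab]|/orP[]/eqP[-> ->]]; last 2 first.
  - by rewrite ewx xW orbT.
  - by rewrite sym ewx xW.
  by rewrite !negb_or eab => /orP[]/andP[_ ->]; rewrite ?orbT.
have disj : [disjoint outp e (x |: W) & [set (w, x); (x, w)]].
  rewrite -setI_eq0; apply/eqP/setP=> -[a b]; rewrite !inE /=.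
  apply/negP=> /andP[/andP[_]]; rewrite !negb_or.
  case/orP=> /andP[H1 H2] /orP[]/eqP[E1 E2]; subst a b; by rewrite ?eqxx ?wW in H1 H2.
have c2 : #|[set (w, x); (x, w)]| = 2.
  rewrite cards2; case: eqP => //= [[E _]]; by move: xW; rewrite -E wW.
move: (subset_leq_card sub); rewrite cardsU (disjoint_setI0 disj) cards0 subn0 c2.
lia.
Qed.

Lemma degen (T : finType) (e : rel T) : is_tree e ->
  forall U : {set T}, U != set0 ->
  exists2 u, u \in U & #|[set x in U | e u x]| <= 1.
Proof.
case=> [[sym irr] n0 conn ne] U Un0.
case: (boolP [exists u in U, #|[set x in U | e u x]| <= 1]).
  by case/existsP=> u /andP[uU h]; exists u.
rewrite negb_exists => /forallP H.
have H2 : forall u, u \in U -> 2 <= #|[set x in U | e u x]|.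
  by move=> u uU; move: (H u); rewrite uU /= -ltnNge.
pose ins := [set p : T * T | (p.1 \in U) && ((p.2 \in U) && e p.1 p.2)].
have cins : #|ins| = \sum_(u in U) #|[set x in U | e u x]|.
  rewrite -sum1_card.
  rewrite (eq_bigl (fun p : T * T => (p.1 \in U) && ((p.2 \in U) && e p.1 p.2))); last first.
    by move=> p; rewrite inE.
  rewrite -(pair_big_dep (fun u => u \in U) (fun u x => (x \in U) && e u x) (fun _ _ => 1)).
  apply: eq_bigr => u _; rewrite -sum1_card; apply: eq_bigl => x; by rewrite inE.
have lins : 2 * #|U| <= #|ins|.
  rewrite cins mulnC -sum_nat_const; apply: leq_sum => u uU; exact: H2.
have lout := outp_card sym irr conn (erefl #|~: U|) Un0.
have disj : [disjoint ins & outp e U].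
  rewrite -setI_eq0; apply/eqP/setP=> -[a b]; rewrite !inE /=.
  by case: (a \in U); case: (b \in U); rewrite ?andbF.
have sub : ins :|: outp e U \subset [set p : T * T | e p.1 p.2].
  apply/subsetP=> -[a b]; rewrite !inE /= => /orP[/and3P[_ _ ->]|/andP[-> _]] //.
move: (subset_leq_card sub); rewrite cardsU (disjoint_setI0 disj) cards0 subn0.
move: ne; rewrite /n_edges => ne.
have cU := cardsC U.
lia.
Qed.

Definition degen_prop (T : finType) (e : rel T) :=
  forall U : {set T}, U != set0 -> exists2 u, u \in U & #|[set x in U | e u x]| <= 1.

Lemma leaf_ind (T : finType) (e : rel T) (P : {set T} -> Prop) :
  degen_prop e -> P set0 ->
  (forall (V : {set T}) u, u \in V -> #|[set x in V | e u x]| <= 1 -> P (V :\ u) -> P V) ->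
  forall V, P V.
Proof.
move=> deg P0 Hs.
suff H : forall n (V : {set T}), #|V| <= n -> P V by move=> V; exact: (H _ V (leqnn _)).
elim=> [|n IH] V hV.
  by move: hV; rewrite leqn0 cards_eq0 => /eqP->.
case: (eqVneq V set0) => [->//|Vn0].
have [u uV hu] := deg V Vn0.
apply: (Hs V u uV hu); apply: IH.
by move: hV; rewrite (cardsD1 u V) uV.
Qed.

Lemma proper2 (T : finType) (e : rel T) : symmetric e -> irreflexive e -> degen_prop e ->
  forall V : {set T}, exists C : {set T},
    forall u v, u \in V -> v \in V -> e u v -> (u \in C) != (v \in C).
Proof.
move=> sym irr deg; apply: (leaf_ind deg).
  by exists set0 => u v; rewrite inE.
move=> V u uV hu [C' HC'].
pose b := if [pick w in [set x in V | e u x]] is Some w then ~~ (w \in C') else true.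
exists [set x | if x == u then b else x \in C'].
have key : forall v, v \in V -> e u v -> (b != (v \in C')) /\ v != u.
  move=> v vV euv; split; last by apply/eqP=> E; move: euv; rewrite E irr.
  rewrite /b; case: pickP => [w wN|/(_ v)]; last by rewrite inE vV euv.
  have -> : v = w.
    by apply: (card_le1_eqP hu); rewrite // inE vV euv.
  by case: (w \in C').
move=> x y xV yV exy; rewrite !inE.
case: (eqVneq x u) => [Ex|nx].
  by subst x; have [H1 H2] := key y yV exy; rewrite (negbTE H2).
case: (eqVneq y u) => [Ey|ny].
  subst y; rewrite sym in exy; have [H1 H2] := key x xV exy.
  by rewrite eq_sym.
by apply: HC'; rewrite // !inE ?nx ?ny.
Qed.

Definition EQ (T : finType) (e : rel T) (Q V : {set T}) y :=
  [set x in V | (x \in Q) && ((x == y) || e x y)].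

Lemma hyper2 (T : finType) (e : rel T) : symmetric e -> irreflexive e -> degen_prop e ->
  forall Q V : {set T}, exists C : {set T},
    forall y, y \in V -> 1 < #|EQ e Q V y| ->
      exists a b, [/\ a \in EQ e Q V y, b \in EQ e Q V y, a \in C & b \notin C].
Proof.
move=> sym irr deg Q; apply: (leaf_ind deg).
  by exists set0 => y; rewrite inE.
move=> V u uV hu [C' HC'].
pose b := if [pick w in [set x in V | e u x]] is Some w then
            (if w \in Q then ~~ (w \in C')
             else if [pick z in EQ e Q (V :\ u) w] is Some z then ~~ (z \in C') else true)
          else true.
pose C := [set x | if x == u then b else x \in C'].
exists C.
have inC : forall x, x != u -> (x \in C) = (x \in C').
  by move=> x nx; rewrite inE (negbTE nx).
have uC : (u \in C) = b by rewrite inE eqxx.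
have fin : forall y z, u \in EQ e Q V y -> z \in EQ e Q V y -> z != u -> b = ~~ (z \in C') ->
    exists a b, [/\ a \in EQ e Q V y, b \in EQ e Q V y, a \in C & b \notin C].
  move=> y z uE zE nz bz.
  case Hb: b.
    exists u, z; split => //; first by rewrite uC.
    by rewrite inC // -[z \in C']negbK -bz Hb.
  exists z, u; split => //; last by rewrite uC Hb.
  by rewrite inC // -[z \in C']negbK -bz Hb.
have Nu1 : forall v w, v \in V -> e u v -> w \in V -> e u w -> v = w.
  by move=> v w vV uv wV uw; apply: (card_le1_eqP hu); rewrite inE ?vV ?wV ?uv ?uw.
have pickN : forall v, v \in V -> e u v ->
    b = (if v \in Q then ~~ (v \in C')
         else if [pick z in EQ e Q (V :\ u) v] is Some z then ~~ (z \in C') else true).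
  move=> v vV uv; rewrite /b; case: pickP => [w|/(_ v)]; last by rewrite inE vV uv.
  by rewrite inE => /andP[wV uw]; rewrite (Nu1 v w).
have sub' : forall y, EQ e Q (V :\ u) y \subset EQ e Q V y.
  by move=> y; apply/subsetP=> x; rewrite !inE => /andP[/andP[_ ->] ->].
have memD : forall y x, x \in EQ e Q V y -> x != u -> x \in EQ e Q (V :\ u) y.
  by move=> y x; rewrite !inE => /andP[-> ->] ->.
move=> y yV /card_gt1P [x1 [x2 [x1E x2E n12]]].
have uin : (x1 != u) -> (x2 != u) -> 1 < #|EQ e Q (V :\ u) y|.
  by move=> n1 n2; apply/card_gt1P; exists x1, x2; split; rewrite ?memD.
have [z [zE nz uE]] : exists z, [/\ z \in EQ e Q V y, z != u &
      (u \in EQ e Q V y) \/ (y != u /\ 1 < #|EQ e Q (V :\ u) y|)].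
  case: (eqVneq x1 u) => [E1|n1].
    subst x1; exists x2; split => //; [by rewrite eq_sym | by left].
  exists x1; split => //.
  case: (eqVneq x2 u) => [E2|n2]; first by subst x2; left.
  case: (eqVneq y u) => [Ey|ny]; last by right; split => //; apply: uin.
  (* y = u, both x1 x2 are neighbours of u: contradiction *)
  subst y; move: x1E x2E; rewrite !inE (negbTE n1) (negbTE n2) /=.
  move=> /and3P[x1V _ e1] /and3P[x2V _ e2].
  by move: n12; rewrite (Nu1 x1 x2) ?eqxx // sym.
case: uE => [uE|[ny big]]; last first.
  have yV' : y \in V :\ u by rewrite !inE ny.
  have [a [b' [aE bE aC bC]]] := HC' y yV' big.
  have na : a != u by move: aE; rewrite !inE => /andP[/andP[]].
  have nb : b' != u by move: bE; rewrite !inE => /andP[/andP[]].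
  exists a, b'; split; rewrite ?inC //; by apply: (subsetP (sub' y)).
case: (eqVneq y u) => [Ey|ny].
  subst y; move: (zE); rewrite inE (negbTE nz) /= => /and3P[zV zQ ezu].
  rewrite sym in ezu.
  by apply: (fin u z) => //; rewrite (pickN z zV ezu) zQ.
case: (boolP (1 < #|EQ e Q (V :\ u) y|)) => [big|small].
  have yV' : y \in V :\ u by rewrite !inE ny.
  have [a [b' [aE bE aC bC]]] := HC' y yV' big.
  have na : a != u by move: aE; rewrite !inE => /andP[/andP[]].
  have nb : b' != u by move: bE; rewrite !inE => /andP[/andP[]].
  exists a, b'; split; rewrite ?inC //; by apply: (subsetP (sub' y)).
move: (uE); rewrite inE eq_sym (negbTE ny) /= => /and3P[_ uQ euy].
have pb := pickN y yV euy.
case yQ: (y \in Q).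
  apply: (fin y y) => //; first by rewrite !inE yV yQ eqxx.
  by rewrite pb yQ.
move: pb; rewrite yQ; case: pickP => [z' z'E|none] pb.
  apply: (fin y z') => //; first by apply: (subsetP (sub' y)).
  by move: z'E; rewrite !inE => /andP[/andP[]].
by move: (none z); rewrite (memD y z zE nz).
Qed.

Lemma domP (T : finType) (e : rel T) (S : {set T}) :
  reflect (forall v, exists2 u, u \in S & (u == v) || e u v) (dominating e S).
Proof.
apply: (iffP forallP) => [H v|H v].
  case/orP: (H v) => [vS|/existsP[u /andP[uS euv]]]; first by exists v; rewrite ?eqxx.
  by exists u; rewrite ?euv ?orbT.
have [u uS /orP[/eqP<-|euv]] := H v; first by rewrite uS.
by apply/orP; right; apply/existsP; exists u; rewrite uS.
Qed.

Lemma gamma_le (T : finType) (e : rel T) (S : {set T}) :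
  dominating e S -> gamma e <= #|S|.
Proof.
move=> dS; rewrite /gamma.
case: arg_minnP => [|M _ HM]; last exact: HM.
by apply/forallP=> v; rewrite inE.
Qed.

Definition Pset (T : finType) (e : rel T) (D : {set T}) :=
  [set v in D | ~~ dominating e (D :\ v)].

Lemma pointL (T : finType) (e : rel T) : symmetric e -> irreflexive e -> degen_prop e ->
  forall D : {set T}, dominating e D -> 2 * gamma e <= #|D| + #|Pset e D|.
Proof.
move=> sym irr deg D dD.
pose P := Pset e D.
pose Q := D :\: P.
have inP : forall v, (v \in P) = (v \in D) && ~~ dominating e (D :\ v).
  by move=> v; rewrite inE.
have inQ : forall v, (v \in Q) = (v \notin P) && (v \in D).
  by move=> v; rewrite /Q in_setD.
have PD : P \subset D by apply/subsetP=> v; rewrite inP => /andP[].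
have cD : #|D| = #|P| + #|Q|.
  by rewrite /Q cardsD (setIidPr PD) subnKC // subset_leq_card.
rewrite -/P; clearbody Q P.
have [C HC] := hyper2 sym irr deg Q setT.
have domH : forall H : {set T}, 
   (forall y, 1 < #|EQ e Q setT y| -> exists2 a, a \in H & a \in EQ e Q setT y) ->
   dominating e (P :|: H).
  move=> H HH; apply/domP => y.
  case: (boolP [exists u in P, (u == y) || e u y]).
    by case/existsP=> u /andP[uP h]; exists u => //; rewrite inE uP.
  rewrite negb_exists => /forallP nP.
  have /domP/(_ y) [x xD dx] := dD.
  have xP : x \notin P by apply/negP=> xP; move: (nP x); rewrite xP dx.
  have dDx : dominating e (D :\ x) by move: xP; rewrite inP xD /= negbK.
  have /domP/(_ y) [z zD dz] := dDx.
  move: zD; rewrite inE => /andP[nzx zD].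
  have zP : z \notin P by apply/negP=> zP; move: (nP z); rewrite zP dz.
  have : 1 < #|EQ e Q setT y|.
    apply/card_gt1P; exists x, z; split; rewrite ?inE ?inQ ?xD ?zD ?xP ?zP ?dx ?dz //.
    by apply/eqP=> E; move: nzx; rewrite E inE eqxx.
  case/HH=> a aH aE; exists a; first by rewrite inE aH orbT.
  by move: aE; rewrite inE => /and3P[].
have d1 : dominating e (P :|: (Q :&: C)).
  apply: domH => y /(HC y (in_setT y)) [a [b [aE bE aC bC]]].
  by exists a; rewrite // inE aC andbT; move: aE; rewrite inE => /and3P[].
have d2 : dominating e (P :|: (Q :\: C)).
  apply: domH => y /(HC y (in_setT y)) [a [b [aE bE aC bC]]].
  by exists b; rewrite // inE bC /=; move: bE; rewrite inE => /and3P[].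
have g1 := gamma_le d1; have g2 := gamma_le d2.
have c1 := cardsU P (Q :&: C); have c2 := cardsU P (Q :\: C).
have cQ := cardsID C Q.
rewrite cD; lia.
Qed.

Definition indep (T : finType) (e : rel T) (S : {set T}) :=
  [forall u in S, forall v in S, ~~ e u v].

Lemma Gamma_ge (T : finType) (e : rel T) : symmetric e -> irreflexive e ->
  forall S : {set T}, indep e S -> #|S| <= Gamma_ e.
Proof.
move=> sym irr S iS.
have iSS : indep e S && (S \subset S) by rewrite iS subxx.
case: (@arg_maxnP _ S (fun M => indep e M && (S \subset M)) (fun M => #|M|) iSS).
move=> M /andP[iM SM] maxM.
have indP : forall u v, u \in M -> v \in M -> ~~ e u v.
  by move=> u v uM vM; move/forallP: iM => /(_ u); rewrite uM => /forallP/(_ v); rewrite vM.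
have mdom : minimal_dominating e M.
  apply/andP; split.
    apply/forallP => v; case vM: (v \in M) => //=.
    case: (boolP (indep e (v |: M))) => [iv|niv].
      have := maxM (v |: M); rewrite iv /= cardsU1 vM.
      have -> : S \subset v |: M by apply: (subset_trans SM); exact: subsetUr.
      by move=> /(_ isT); rewrite ltnn.
    apply/existsP; move: niv; rewrite /indep negb_forall => /existsP[a].
    rewrite negb_imply negb_forall => /andP[aM /existsP[b]].
    rewrite negb_imply negbK => /andP[bM eab].
    move: aM bM; rewrite !inE.
    case/orP=> [/eqP Ea|aM]; case/orP=> [/eqP Eb|bM].
    - by move: eab; rewrite Ea Eb irr.
    - by exists b; rewrite // bM -Ea sym.
    - by exists a; rewrite // aM -Eb.
    - by move: (indP a b aM bM); rewrite eab.
  apply/forallP => S'; apply/implyP => /properP [sub [m mM mS']].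
  apply/negP => /forallP/(_ m); rewrite (negbTE mS') /= => /existsP[u /andP[uS' eum]].
  by move: (indP u m (subsetP sub u uS') mM); rewrite eum.
apply: (leq_trans (subset_leq_card SM)).
rewrite /Gamma_; apply: (@leq_bigmax_cond _ (fun S0 : {set T} => minimal_dominating e S0) (fun M : {set T} => #|M|) M); exact: mdom.
Qed.

Lemma pointU (T : finType) (e : rel T) : symmetric e -> irreflexive e -> degen_prop e ->
  forall D : {set T}, dominating e D -> #|D| + #|Pset e D| <= 2 * Gamma_ e.
Proof.
move=> sym irr deg D dD.
pose P := Pset e D.
have inP : forall v, (v \in P) = (v \in D) && ~~ dominating e (D :\ v).
  by move=> v; rewrite inE.
pose P1 := [set v in D | ~~ [exists u in D, e u v]].
have inP1 : forall v, (v \in P1) = (v \in D) && ~~ [exists u in D, e u v].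
  by move=> v; rewrite inE.
pose Y := [set y | ~~ [exists p in P1, (p == y) || e p y]].
have inY : forall y, (y \in Y) = ~~ [exists p in P1, (p == y) || e p y].
  by move=> y; rewrite inE.
rewrite -/P; clearbody Y; clearbody P1 P.
have P1D : P1 \subset D by apply/subsetP=> v; rewrite inP1 => /andP[].
have P1P : P1 \subset P.
  apply/subsetP=> v; rewrite inP1 inP => /andP[vD nv]; rewrite vD /=.
  apply/negP=> /forallP/(_ v); rewrite !inE eqxx /= => /existsP[u /andP[]].
  rewrite !inE => /andP[_ uD] euv; move: nv; apply/negP; rewrite negbK.
  by apply/existsP; exists u; rewrite uD.
have DY : D :\: P1 \subset Y.
  apply/subsetP=> x; rewrite inE => /andP[xP1 xD]; rewrite inY.
  apply/negP=> /existsP[p /andP[pP1 /orP[/eqP E|epx]]].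
    by move: xP1; rewrite -E pP1.
  move: pP1; rewrite inP1 => /andP[_ /negP]; apply; apply/existsP; exists x.
  by rewrite xD sym.
pose f v := odflt v [pick w | ~~ ((w \in D :\ v) || [exists u in D :\ v, e u w])].
have fP : forall v, v \in P :\: P1 ->
   [/\ f v \notin D, f v \in Y & forall u, u \in D -> e u (f v) -> u = v].
  move=> v; rewrite inE => /andP[vP1 vP].
  move: (vP); rewrite inP => /andP[vD /forallPn [w0 hw0]].
  rewrite /f; case: pickP => [w hw|/(_ w0)]; last by rewrite hw0.
  rewrite /= negb_or in hw; case/andP: hw => wDv /existsPn nw.
  have uv : forall u, u \in D -> e u w -> u = v.
    move=> u uD euw; case: (eqVneq u v) => // nuv.
    by move: (nw u); rewrite !inE nuv uD euw.
  have wv : w != v.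
    apply/negP=> /eqP E; move: vP1; rewrite inP1 vD /= negbK => /existsP[u' /andP[uD euv]].
    have := uv u' uD; rewrite E => /(_ euv) Eu; by move: euv; rewrite Eu irr.
  have wD : w \notin D by move: wDv; rewrite !inE wv.
  split => //.
  rewrite /= inY; apply/negP=> /existsP[p /andP[pP1 /orP[/eqP E|epw]]].
    by move: wD; rewrite -E (subsetP P1D p pP1).
  have := uv p (subsetP P1D p pP1) epw => Ep.
  by move: vP1; rewrite -Ep pP1.
have finj : {in P :\: P1 &, injective f}.
  move=> v1 v2 h1 h2 E.
  have [wD _ u1] := fP v1 h1; have [_ _ u2] := fP v2 h2.
  have /domP/(_ (f v1)) [u uD /orP[/eqP Eu|euw]] := dD.
    by move: wD; rewrite -Eu uD.
  by rewrite -(u1 u uD euw) (u2 u uD) // -E.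
have fsub : f @: (P :\: P1) \subset Y :\: D.
  apply/subsetP=> w /imsetP[v vP ->]; have [wD wY _] := fP v vP.
  by rewrite inE wD wY.
have c1 := card_in_imset finj.
have c2 := subset_leq_card fsub.
have c3 : #|P :\: P1| = #|P| - #|P1| by rewrite cardsD (setIidPr P1P).
have c4 : #|D :\: P1| = #|D| - #|P1| by rewrite cardsD (setIidPr P1D).
have c5 : #|D :\: P1| <= #|Y :&: D|.
  by apply: subset_leq_card; rewrite subsetI DY subsetDl.
have c6 := cardsID D Y.
have c7 := subset_leq_card P1P.
have c8 := subset_leq_card P1D.
have [C HC] := proper2 sym irr deg setT.
have indK : forall c : bool, indep e (P1 :|: [set y in Y | (y \in C) == c]).
  move=> c; apply/forallP=> u; apply/implyP=> uI; apply/forallP=> v; apply/implyP=> vI.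
  apply/negP=> euv.
  move: uI vI; rewrite !inE.
  have noP1 : forall a b, a \in P1 -> b \in D -> ~~ e b a.
    by move=> a b; rewrite inP1 => /andP[_ /existsPn H] bD; move: (H b); rewrite bD.
  have noY : forall a b, a \in P1 -> b \in Y -> ~~ e a b.
    move=> a b aP1; rewrite inY => /existsPn/(_ a); rewrite aP1 negb_or.
    by case/andP.
  case/orP=> [uP1|/andP[uY uc]]; case/orP=> [vP1|/andP[vY vc]].
  - by move: (noP1 v u vP1 (subsetP P1D u uP1)); rewrite euv.
  - by move: (noY u v uP1 vY); rewrite euv.
  - by move: (noY v u vP1 uY); rewrite sym euv.
  - by move: (HC u v (in_setT u) (in_setT v) euv); rewrite (eqP uc) (eqP vc) eqxx.
have cardK : forall c : bool,
    #|P1 :|: [set y in Y | (y \in C) == c]| = #|P1| + #|[set y in Y | (y \in C) == c]|.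
  move=> c; rewrite cardsU; suff -> : P1 :&: [set y in Y | (y \in C) == c] = set0.
    by rewrite cards0 subn0.
  apply/setP=> x; rewrite !inE; apply/negP=> /and3P[xP1 xY _].
  by move: xY; rewrite inY => /existsPn/(_ x); rewrite xP1 eqxx.
have g1 := Gamma_ge sym irr (indK true).
have g2 := Gamma_ge sym irr (indK false).
rewrite !cardK in g1 g2.
have cY : #|[set y in Y | (y \in C) == true]| + #|[set y in Y | (y \in C) == false]| = #|Y|.
  rewrite -(cardsID C Y); congr (_ + _); apply: eq_card => x; rewrite !inE.
    by case: (x \in C); rewrite ?andbF ?andbT.
  by case: (x \in C); rewrite ?andbF ?andbT.
lia.
Qed.

Lemma dbl (T : finType) (P : pred {set T}) (R : {set T} -> T -> bool) :
  \sum_(D | P D) #|[set v | R D v]| = \sum_v #|[set D | P D && R D v]|.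
Proof.
have cE : forall (U : finType) (A : {set U}), #|A| = \sum_u (u \in A : nat).
  by move=> U A; rewrite -sum1_card big_mkcond; apply: eq_bigr => u _; case: (u \in A).
under eq_bigr do rewrite cE.
rewrite exchange_big; apply: eq_bigr => v _.
rewrite [RHS]cE [LHS]big_mkcond; apply: eq_bigr => D _; rewrite !inE; by case: (P D); case: (R D v).
Qed.

Lemma dom_mono (T : finType) (e : rel T) (S S' : {set T}) :
  dominating e S -> S \subset S' -> dominating e S'.
Proof.
move=> /domP dS sub; apply/domP => v; have [u uS h] := dS v.
by exists u; rewrite ?(subsetP sub u uS).
Qed.

Lemma avc (T : finType) (e : rel T) (v : T) :
  #|[set D | dominating e D && (v \in D)]| =
  #|[set D | dominating e D && (v \notin D)]| +
  #|[set D | dominating e D && ((v \in D) && ~~ dominating e (D :\ v))]|.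
Proof.
set A := [set D | dominating e D && (v \in D)].
rewrite -(cardsID [set D | dominating e (D :\ v)] A).
congr (_ + _); last by apply: eq_card => D; rewrite /A !inE; case: (dominating e D); case: (v \in D); case: (dominating e (D :\ v)).
have inj : {in [set D | dominating e D && (v \notin D)] &, injective (fun D => v |: D)}.
  move=> D1 D2; rewrite !inE => /andP[_ n1] /andP[_ n2] E.
  by rewrite -(setU1K n1) -(setU1K n2) E.
rewrite -(card_in_imset inj); apply: eq_card => D; rewrite /A !inE.
apply/idP/imsetP.
  case/andP=> /andP[dD vD] dDv; exists (D :\ v); last by rewrite setD1K.
  by rewrite inE dDv !inE eqxx.
case=> D0; rewrite inE => /andP[d0 n0] ->.
rewrite setU1K // d0 setU11 /= andbT.
by rewrite andbT; apply: (dom_mono d0); apply: subsetUr.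
Qed.

Lemma sum_identity (T : finType) (e : rel T) :
  \sum_(D | dominating e D) (#|D| + #|Pset e D|) + #|T| * n_dom e =
  3 * \sum_(D | dominating e D) #|D|.
Proof.
have s1 : \sum_(D | dominating e D) #|D| =
          \sum_v #|[set D | dominating e D && (v \in D)]|.
  rewrite -dbl; apply: eq_bigr => D _; apply: eq_card => v; by rewrite inE.
have s2 : \sum_(D | dominating e D) #|Pset e D| =
          \sum_v #|[set D | dominating e D && ((v \in D) && ~~ dominating e (D :\ v))]|.
  by rewrite -dbl.
have s3 : \sum_(D | dominating e D) (#|T| - #|D|) =
          \sum_v #|[set D | dominating e D && (v \notin D)]|.
  rewrite -dbl; apply: eq_bigr => D _.
  rewrite -(cardsC D); rewrite addKn; apply: eq_card => v; by rewrite !inE.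
have nd : #|T| * n_dom e = \sum_(D | dominating e D) #|D| + \sum_(D | dominating e D) (#|T| - #|D|).
  rewrite -big_split /= /n_dom.
  rewrite (eq_bigr (fun _ => #|T|)); last by move=> D _; rewrite subnKC // max_card.
  rewrite sum_nat_const mulnC; congr (_ * _); apply: eq_card => D; by rewrite inE.
rewrite big_split /= nd s1 s2 s3.
rewrite !mulSn mul0n addn0 -!big_split /=; apply: eq_bigr => v _.
rewrite avc; set b := #|[set D : {set T} | dominating e D && (v \notin D)]|; set c := #|[set D : {set T} | dominating e D && ((v \in D) && ~~ dominating e (D :\ v))]|. lia.
Qed.

Lemma sum_const_dom (T : finType) (e : rel T) c :
  \sum_(D | dominating e D) c = n_dom e * c.
Proof.
rewrite (eq_bigl (fun D => D \in [set D | dominating e D])); last by move=> D; rewrite inE.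
by rewrite sum_nat_const.
Qed.

Unset Implicit Arguments.
Import GRing.Theory Num.Theory.
Local Open Scope ring_scope.

Theorem theorem5p1 (T : finType) (e : rel T) :
  is_tree e ->
  ((#|T|%:R + 2 * (gamma e)%:R) / 3 <= avd e :> rat) /\
  (avd e <= (#|T|%:R + 2 * (Gamma_ e)%:R) / 3 :> rat).
Proof.
move=> tr; have deg : degen_prop e := degen tr.
case: tr => [[sym irr] _ _ _].
have Npos : (0 < n_dom e)%N.
  rewrite /n_dom card_gt0; apply/set0Pn; exists setT; rewrite inE.
  by apply/forallP=> v; rewrite inE.
have id := sum_identity e.
have lo : (n_dom e * (2 * gamma e) <= \sum_(D | dominating e D) (#|D| + #|Pset e D|))%N.
  rewrite -sum_const_dom; apply: leq_sum => D dD; exact: pointL.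
have hi : (\sum_(D | dominating e D) (#|D| + #|Pset e D|) <= n_dom e * (2 * Gamma_ e))%N.
  rewrite -sum_const_dom; apply: leq_sum => D dD; exact: pointU.
set S := (\sum_(D | dominating e D) #|D|)%N in id.
have e1 : (n_dom e * (#|T| + 2 * gamma e) <= 3 * S)%N by rewrite -id; lia.
have e2 : (3 * S <= n_dom e * (#|T| + 2 * Gamma_ e))%N by rewrite -id; lia.
have N0 : 0 < (n_dom e)%:R :> rat by rewrite ltr0n.
rewrite /avd -/S; split.
  rewrite ler_pdivlMr // mulrAC ler_pdivrMr //.
  have -> : (#|T|%:R + 2 * (gamma e)%:R) * (n_dom e)%:R = ((#|T| + 2 * gamma e) * n_dom e)%:R :> rat.
    by rewrite natrM natrD natrM.
  have -> : S%:R * 3 = (S * 3)%:R :> rat by rewrite natrM.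
  rewrite ler_nat; lia.
rewrite ler_pdivrMr // mulrAC ler_pdivlMr //.
have -> : (#|T|%:R + 2 * (Gamma_ e)%:R) * (n_dom e)%:R = ((#|T| + 2 * Gamma_ e) * n_dom e)%:R :> rat.
  by rewrite natrM natrD natrM.
have -> : S%:R * 3 = (S * 3)%:R :> rat by rewrite natrM.
rewrite ler_nat; lia.
Qed.
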